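(* Let $X$ be a topological space that has a $\pi$-tree and let $C\subseteq X$ be at most countable. Then the subspace $X\setminus C$ has a $\pi$-tree.
   Context: A tree is a pair $\mathcal T=(Q,<)$ where $<$ is an irreflexive transitive relation on $Q$ such that for every $x\in Q$ the set $\{v\in Q:v<x\}$ is well-ordered by $<$. $\mathrm{sons}(x)=\{s: x<s$ and there is no $v$ with $x<v<s\}$. A branch is an inclusion-maximal set of pairwise comparable nodes. A foliage tree is a pair $\mathbf F=(\mathcal T,l)$ with $\mathcal T$ a tree (the skeleton) and $l$ a function on its nodes; $\mathbf F_x:=l(x)$ is the leaf at $x$. $\mathrm{fruit}_{\mathbf F}(A)=\bigcap_{x\in A}\mathbf F_x$; $\mathrm{shoot}_{\mathbf F}(z)=\{\bigcup_{s\in C'}\mathbf F_s: C'$ cofinite in $\mathrm{sons}(z)\}$; $\mathrm{scope}_{\mathbf F}(p)=\{y:p\in\mathbf F_y\}$; $\gamma\gg\delta$ means every nonempty $D\in\delta$ contains some nonempty $G\in\gamma$. A Baire foliage tree on a space $X$ is a foliage tree whose skeleton is isomorphic to $(\omega^{<\omega},\subsetneq)$, all of whose leaves are open in $X$, which is locally strict (for each non-maximal $x$, $\mathbf F_x$ is the disjoint union of $\mathbf F_s$, $s\in\mathrm{sons}(x)$), has strict branches (fruit of every branch is a singleton), and whose leaf at the least node is $X$. It grows into $X$ if for every $p\in X$ and every neighbourhood $U$ of $p$ there is $z\in\mathrm{scope}_{\mathbf F}(p)$ with $\mathrm{shoot}_{\mathbf F}(z)\gg\{U\}$. A $\pi$-tree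 on $X$ is a Baire foliage tree on $X$ that grows into $X$. *)

(* Defs.v *)
From Stdlib Require Import List.
Import ListNotations.
Set Implicit Arguments.

Definition is_topology (X : Type) (opn : (X -> Prop) -> Prop) : Prop :=
  opn (fun _ => True) /\
  (forall U V, opn U -> opn V -> opn (fun p => U p /\ V p)) /\
  (forall F : (X -> Prop) -> Prop, (forall U, F U -> opn U) ->
     opn (fun p => exists U, F U /\ U p)).

Definition compl_sub (X : Type) (C : X -> Prop) : Type := {x : X | ~ C x}.

Definition subspace_open (X : Type) (opn : (X -> Prop) -> Prop) (C : X -> Prop)
  (V : compl_sub C -> Prop) : Prop :=
  exists U, opn U /\ forall y : compl_sub C, V y <-> U (proj1_sig y).

Definition at_most_countable (X : Type) (C : X -> Prop) : Prop :=
  exists f : X -> nat, forall x y, C x -> C y -> f x = f y -> x = y.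

Definition is_tree (Q : Type) (lt : Q -> Q -> Prop) : Prop :=
  (forall x, ~ lt x x) /\
  (forall x y z, lt x y -> lt y z -> lt x z) /\
  (* {v | v < x} is well-ordered by < : linear, and every nonempty subset has a least element *)
  (forall x,
     (forall v w, lt v x -> lt w x -> v = w \/ lt v w \/ lt w v) /\
     (forall A : Q -> Prop, (exists v, A v /\ lt v x) ->
        exists m, A m /\ lt m x /\ forall v, A v -> lt v x -> m = v \/ lt m v)).

Definition sons (Q : Type) (lt : Q -> Q -> Prop) (x s : Q) : Prop :=
  lt x s /\ ~ (exists v, lt x v /\ lt v s).

Definition pairwise_comparable (Q : Type) (lt : Q -> Q -> Prop) (B : Q -> Prop) : Prop :=
  forall x y, B x -> B y -> x = y \/ lt x y \/ lt y x.

Definition branch (Q : Type) (lt : Q -> Q -> Prop) (B : Q -> Prop) : Prop :=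
  pairwise_comparable lt B /\
  forall B' : Q -> Prop, (forall x, B x -> B' x) -> pairwise_comparable lt B' ->
    forall x, B' x -> B x.

(** ω^{<ω} ordered by strict inclusion of graphs = strict prefix order on lists. *)
Definition sprefix (s u : list nat) : Prop := exists t, t <> [] /\ s ++ t = u.

Section Foliage.
Variables (X Q : Type) (lt : Q -> Q -> Prop) (l : Q -> X -> Prop).

Definition fruit (A : Q -> Prop) : X -> Prop := fun p => forall x, A x -> l x p.

Definition cofinite_in_sons (z : Q) (C' : Q -> Prop) : Prop :=
  (forall s, C' s -> sons lt z s) /\
  exists L : list Q, forall s, sons lt z s -> ~ C' s -> In s L.

(* shoot(z) as a family of subsets of X (membership up to extensional equality) *)
Definition shoot (z : Q) (G : X -> Prop) : Prop :=
  exists C', cofinite_in_sons z C' /\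
    forall p, G p <-> exists s, C' s /\ l s p.

Definition scope (p : X) (y : Q) : Prop := l y p.

Definition locally_strict : Prop :=
  forall x, (exists y, lt x y) ->
    (forall p, l x p <-> exists s, sons lt x s /\ l s p) /\
    (forall s s', sons lt x s -> sons lt x s' -> s <> s' -> forall p, ~ (l s p /\ l s' p)).

Definition strict_branches : Prop :=
  forall B, branch lt B -> exists p, forall q, fruit B q <-> q = p.
End Foliage.

Definition refines (X : Type) (gamma delta : (X -> Prop) -> Prop) : Prop :=
  forall D, delta D -> (exists p, D p) ->
    exists G, gamma G /\ (exists p, G p) /\ forall p, G p -> D p.

Definition singleton_family (X : Type) (U : X -> Prop) : (X -> Prop) -> Prop :=
  fun D => forall p, D p <-> U p.

Definition skeleton_is_baire (Q : Type) (lt : Q -> Q -> Prop) : Prop :=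
  exists phi : Q -> list nat,
    (forall x y, phi x = phi y -> x = y) /\
    (forall s, exists x, phi x = s) /\
    (forall x y, lt x y <-> sprefix (phi x) (phi y)).

Definition baire_foliage_tree (X : Type) (opn : (X -> Prop) -> Prop)
  (Q : Type) (lt : Q -> Q -> Prop) (l : Q -> X -> Prop) : Prop :=
  is_tree lt /\ skeleton_is_baire lt /\
  (forall x, opn (l x)) /\
  locally_strict lt l /\
  strict_branches lt l /\
  (forall r, (forall x, r = x \/ lt r x) -> forall p, l r p).

Definition neighbourhood (X : Type) (opn : (X -> Prop) -> Prop) (p : X) (N : X -> Prop) : Prop :=
  exists U, opn U /\ U p /\ forall q, U q -> N q.

Definition grows_into (X : Type) (opn : (X -> Prop) -> Prop)
  (Q : Type) (lt : Q -> Q -> Prop) (l : Q -> X -> Prop) : Prop :=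
  forall p N, neighbourhood opn p N ->
    exists z, scope l p z /\ refines (shoot lt l z) (singleton_family N).

Definition pi_tree (X : Type) (opn : (X -> Prop) -> Prop)
  (Q : Type) (lt : Q -> Q -> Prop) (l : Q -> X -> Prop) : Prop :=
  baire_foliage_tree opn lt l /\ grows_into opn lt l.

Definition has_pi_tree (X : Type) (opn : (X -> Prop) -> Prop) : Prop :=
  exists (Q : Type) (lt : Q -> Q -> Prop) (l : Q -> X -> Prop), pi_tree opn lt l.

(* Main.v *)
Require Import Defs.
From Stdlib Require Import FunctionalExtensionality PropExtensionality.
From Stdlib Require Import List Lia Arith ClassicalEpsilon Classical ProofIrrelevance.
Import ListNotations.

Definition pe (a b : list nat) : Prop := exists t, a ++ t = b.

Lemma sprefix_len a b : sprefix a b -> length a < length b.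
Proof. intros [t [Ht <-]]. rewrite length_app. destruct t; [congruence|simpl; lia]. Qed.

Lemma pe_len a b : pe a b -> length a <= length b.
Proof. intros [t <-]. rewrite length_app. lia. Qed.

Lemma pe_refl a : pe a a.
Proof. exists []. apply app_nil_r. Qed.

Lemma pe_trans a b c : pe a b -> pe b c -> pe a c.
Proof. intros [t1 <-] [t2 <-]. exists (t1 ++ t2). now rewrite app_assoc. Qed.

Lemma sp_pe a b : sprefix a b -> pe a b.
Proof. intros [t [_ H]]. now exists t. Qed.

Lemma pe_sp a b : pe a b -> a = b \/ sprefix a b.
Proof. intros [t <-]. destruct t. left; now rewrite app_nil_r. right. exists (n :: t). split; congruence. Qed.

Lemma pe_comparable a b x : pe a x -> pe b x -> pe a b \/ pe b a.
Proof.
  intros [t1 H1] [t2 H2]. rewrite <- H2 in H1. apply app_eq_app in H1.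
  destruct H1 as [l [[-> _]|[-> _]]]. right; now exists l. left; now exists l.
Qed.

Lemma pe_eq_len a b : pe a b -> length a = length b -> a = b.
Proof. intros [t <-] H. rewrite length_app in H. destruct t. now rewrite app_nil_r. simpl in H; lia. Qed.

Lemma pe_antisym a b : pe a b -> pe b a -> a = b.
Proof. intros H1 H2. apply pe_eq_len; auto. apply pe_len in H1; apply pe_len in H2; lia. Qed.

Lemma pe_app a t : pe a (a ++ t).
Proof. now exists t. Qed.

Lemma sp_trans a b c : sprefix a b -> sprefix b c -> sprefix a c.
Proof.
  intros [t1 [H1 <-]] [t2 [H2 <-]]. exists (t1 ++ t2). split.
  destruct t1; [congruence|simpl; congruence]. now rewrite app_assoc.
Qed.

Lemma is_tree_sp : is_tree sprefix.
Proof.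
  split; [|split].
  - intros x H. apply sprefix_len in H. lia.
  - apply sp_trans.
  - intros x. split.
    + intros v w Hv Hw. destruct (pe_comparable v w x (sp_pe _ _ Hv) (sp_pe _ _ Hw)) as [H|H];
      apply pe_sp in H; destruct H; subst; auto.
    + intros A [v [Av Hv]].
      remember (length v) as n. revert v Heqn Av Hv.
      induction n as [n IH] using (well_founded_induction lt_wf). intros v Hn Av Hv.
      destruct (classic (exists v', A v' /\ sprefix v' x /\ length v' < length v)) as [[v' [A1 [A2 A3]]]|Hno].
      * eapply (IH (length v')); eauto. lia.
      * exists v. split; auto. split; auto. intros w Aw Hw.
        destruct (pe_comparable v w x (sp_pe _ _ Hv) (sp_pe _ _ Hw)) as [H|H];
        apply pe_sp in H; destruct H as [H|H]; try (left; congruence); try (right; assumption).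
        exfalso; apply Hno. exists w. split; auto. split; auto. now apply sprefix_len.
Qed.

Lemma sons_sp z s : sons sprefix z s <-> exists m, s = z ++ [m].
Proof.
  split.
  - intros [[t [Ht Hs]] Hno]. destruct t as [|m t']; [congruence|].
    destruct t' as [|m' t''].
    + exists m; auto.
    + exfalso. apply Hno. exists (z ++ [m]). split.
      * exists [m]; split; auto; congruence.
      * exists (m' :: t''). split; [congruence|]. rewrite <- Hs, <- app_assoc. reflexivity.
  - intros [m ->]. split. exists [m]; split; auto; congruence.
    intros [v [H1 H2]]. apply sprefix_len in H1. apply sprefix_len in H2.
    rewrite length_app in H2. simpl in H2. lia.
Qed.

Lemma sp_app a m : sprefix a (a ++ [m]).
Proof. exists [m]; split; auto; congruence. Qed.

Definition pick {A : Type} (P : A -> Prop) (d : A) : A :=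
  match excluded_middle_informative (exists x, P x) with
  | left h => proj1_sig (constructive_indefinite_description P h)
  | right _ => d end.

Lemma pick_spec {A : Type} (P : A -> Prop) d : (exists x, P x) -> P (pick P d).
Proof. intros H. unfold pick. destruct excluded_middle_informative as [h|h].
  apply (proj2_sig (constructive_indefinite_description P h)). contradiction. Qed.

Module OldT.


Section Old.
Variables (X : Type) (opn : (X -> Prop) -> Prop) (Q : Type) (lt : Q -> Q -> Prop) (l : Q -> X -> Prop).
Variables (phi : Q -> list nat) (psi : list nat -> Q).
Hypothesis Hinj : forall x y, phi x = phi y -> x = y.
Hypothesis Hpsi : forall u, phi (psi u) = u.
Hypothesis Hlt : forall x y, lt x y <-> sprefix (phi x) (phi y).
Hypothesis Hopen : forall x, opn (l x).
Hypothesis Hls : locally_strict lt l.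
Hypothesis Hsb : strict_branches lt l.
Hypothesis Hroot : forall r, (forall x, r = x \/ lt r x) -> forall p, l r p.
Hypothesis Hgr : grows_into opn lt l.

Definition L u := l (psi u).

Lemma psi_phi x : psi (phi x) = x.
Proof. apply Hinj. now rewrite Hpsi. Qed.

Lemma old_sons u s : sons lt (psi u) s <-> exists n, s = psi (u ++ [n]).
Proof.
  assert (E : sons lt (psi u) s <-> sons sprefix u (phi s)).
  { unfold sons. rewrite Hlt, Hpsi. split; intros [H1 H2]; split; auto; intros [v [V1 V2]]; apply H2.
    - exists (psi v). rewrite !Hlt, !Hpsi. auto.
    - exists (phi v). apply Hlt in V1, V2. rewrite Hpsi in V1. auto. }
  rewrite E, sons_sp. split; intros [n Hn]; exists n.
  - rewrite <- Hn. now rewrite psi_phi.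
  - rewrite Hn. apply Hpsi.
Qed.

Lemma L0 : forall p, L [] p.
Proof.
  apply Hroot. intros x. destruct (phi x) eqn:E.
  - left. apply Hinj. now rewrite Hpsi.
  - right. apply Hlt. rewrite Hpsi, E. exists (n :: l0). split; auto; congruence.
Qed.

Lemma Lo u : opn (L u).
Proof. apply Hopen. Qed.

Lemma Lp u p : L u p <-> exists n, L (u ++ [n]) p.
Proof.
  destruct (Hls (psi u)) as [H1 _].
  { exists (psi (u ++ [0])). apply Hlt. rewrite !Hpsi. apply sp_app. }
  unfold L. rewrite H1. split.
  - intros [s [Hs Hp]]. apply old_sons in Hs. destruct Hs as [n ->]. eauto.
  - intros [n Hn]. exists (psi (u ++ [n])). split; auto. apply old_sons. eauto.
Qed.

Lemma Ld u n n' p : n <> n' -> L (u ++ [n]) p -> L (u ++ [n']) p -> False.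
Proof.
  intros Hn H1 H2. destruct (Hls (psi u)) as [_ H].
  { exists (psi (u ++ [0])). apply Hlt. rewrite !Hpsi. apply sp_app. }
  apply (H (psi (u ++ [n])) (psi (u ++ [n'])) ltac:(apply old_sons; eauto) ltac:(apply old_sons; eauto)) with p; auto.
  intros E. apply (f_equal phi) in E. rewrite !Hpsi in E. apply app_inj_tail in E. now destruct E.
Qed.

Lemma Lmono a t p : L (a ++ t) p -> L a p.
Proof.
  revert p. induction t using rev_ind; intros p H.
  - now rewrite app_nil_r in H.
  - apply IHt. apply Lp. exists x. now rewrite <- app_assoc.
Qed.

Lemma Lb (s : nat -> list nat) : (forall m, exists n, s (S m) = s m ++ [n]) ->
  exists pt, forall q, (forall m, L (s m) q) <-> q = pt.
Proof.
  intros Hs.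
  assert (Hlen : forall m, length (s m) = length (s 0) + m).
  { induction m. lia. destruct (Hs m) as [n ->]. rewrite length_app; simpl; lia. }
  assert (Hch : forall m k, pe (s m) (s (m + k))).
  { intros m k. induction k. rewrite Nat.add_0_r. apply pe_refl.
    eapply pe_trans; eauto. rewrite Nat.add_succ_r. destruct (Hs (m + k)) as [n ->]. apply pe_app. }
  assert (Hcomp : forall m m', pe (s m) (s m') \/ pe (s m') (s m)).
  { intros m m'. destruct (Nat.le_ge_cases m m') as [H|H].
    - left. replace m' with (m + (m' - m)) by lia. apply Hch.
    - right. replace m with (m' + (m - m')) by lia. apply Hch. }
  set (B := fun x => exists m, pe (phi x) (s m)).
  assert (HB : branch lt B).
  { split.
    - intros x y [m Hx] [m' Hy].
      assert (Hxy : pe (phi x) (phi y) \/ pe (phi y) (phi x)).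
      { destruct (Hcomp m m') as [H|H].
        - apply (pe_comparable _ _ (s m')); auto. eapply pe_trans; eauto.
        - apply (pe_comparable _ _ (s m)); auto. eapply pe_trans; eauto. }
      destruct Hxy as [H|H]; apply pe_sp in H; destruct H as [H|H].
      + left; now apply Hinj.
      + right; left; now apply Hlt.
      + left; symmetry; now apply Hinj.
      + right; right; now apply Hlt.
    - intros B' Hsub Hpc x Hx.
      set (m := length (phi x)).
      set (a := firstn (length (phi x)) (s m)).
      assert (Ha : pe a (s m)).
      { exists (skipn (length (phi x)) (s m)). apply firstn_skipn. }
      assert (Hal : length a = length (phi x)).
      { unfold a. rewrite length_firstn. rewrite Hlen. unfold m. lia. }
      assert (By : B (psi a)). { exists m. now rewrite Hpsi. }
      destruct (Hpc x (psi a) Hx (Hsub _ By)) as [E|[E|E]].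
      + now rewrite E.
      + apply Hlt in E. rewrite Hpsi in E. apply sprefix_len in E. lia.
      + apply Hlt in E. rewrite Hpsi in E. apply sprefix_len in E. lia. }
  destruct (Hsb B HB) as [pt Hpt]. exists pt. intros q. rewrite <- (Hpt q). unfold fruit. split.
  - intros H x [m [t Ht]]. rewrite <- (psi_phi x). apply (Lmono _ t). rewrite Ht. apply H.
  - intros H m. apply H. exists m. rewrite Hpsi. apply pe_refl.
Qed.

Lemma Lg p W : opn W -> W p -> exists u, L u p /\ exists N0, forall n, N0 <= n -> forall q, L (u ++ [n]) q -> W q.
Proof.
  intros HW Wp.
  destruct (Hgr p W) as [z [Hz Href]].
  { exists W. split; auto. }
  destruct (Href W) as [G [[C' [[HC1 [Lst HL]] HG]] [_ HGW]]].
  { unfold singleton_family; tauto. } { now exists p. }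
  exists (phi z). split. { unfold L. now rewrite psi_phi. }
  exists (S (list_max (map (fun s => last (phi s) 0) Lst))).
  intros n Hn q Hq.
  apply HGW. apply HG.
  assert (Hs : sons lt z (psi (phi z ++ [n]))).
  { rewrite <- (psi_phi z) at 1. apply old_sons. eauto. }
  destruct (classic (C' (psi (phi z ++ [n])))) as [Hc|Hc].
  - eexists; split; eauto.
  - exfalso. specialize (HL _ Hs Hc).
    assert (Hle : last (phi (psi (phi z ++ [n]))) 0 <= list_max (map (fun s => last (phi s) 0) Lst)).
    { assert (Hf := proj1 (list_max_le (map (fun s => last (phi s) 0) Lst) _) (le_n _)).
      rewrite Forall_forall in Hf. apply Hf. apply in_map_iff. eauto. }
    rewrite Hpsi, last_last in Hle. lia.
Qed.
End Old.

End OldT.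


Definition skip1 e n := if n <? e then n else S n.
Definition skip2 b n := if n <? b then n else S (S n).

Lemma skip1_ne e n : skip1 e n <> e.
Proof. unfold skip1. destruct (Nat.ltb_spec n e); lia. Qed.
Lemma skip1_ge e n : n <= skip1 e n.
Proof. unfold skip1. destruct (Nat.ltb_spec n e); lia. Qed.
Lemma skip1_inj e n n' : skip1 e n = skip1 e n' -> n = n'.
Proof. unfold skip1. destruct (Nat.ltb_spec n e), (Nat.ltb_spec n' e); lia. Qed.
Lemma skip1_surj e k : k <> e -> exists n, skip1 e k = k \/ skip1 e n = k.
Proof. intros H. destruct (Nat.lt_ge_cases k e).
  - exists k. right. unfold skip1. destruct (Nat.ltb_spec k e); lia.
  - exists (pred k). right. unfold skip1. destruct (Nat.ltb_spec (pred k) e); lia. Qed.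
Lemma skip2_ne1 b n : skip2 b n <> b.
Proof. unfold skip2. destruct (Nat.ltb_spec n b); lia. Qed.
Lemma skip2_ne2 b n : skip2 b n <> S b.
Proof. unfold skip2. destruct (Nat.ltb_spec n b); lia. Qed.
Lemma skip2_ge b n : n <= skip2 b n.
Proof. unfold skip2. destruct (Nat.ltb_spec n b); lia. Qed.
Lemma skip2_inj b n n' : skip2 b n = skip2 b n' -> n = n'.
Proof. unfold skip2. destruct (Nat.ltb_spec n b), (Nat.ltb_spec n' b); lia. Qed.
Lemma skip2_surj b k : k <> b -> k <> S b -> exists n, skip2 b n = k.
Proof. intros H H'. destruct (Nat.lt_ge_cases k b).
  - exists k. unfold skip2. destruct (Nat.ltb_spec k b); lia.
  - exists (k - 2). unfold skip2. destruct (Nat.ltb_spec (k - 2) b); lia. Qed.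
Lemma skip1_surj' e k : k <> e -> exists n, skip1 e n = k.
Proof. intros H. destruct (Nat.lt_ge_cases k e).
  - exists k. unfold skip1. destruct (Nat.ltb_spec k e); lia.
  - exists (pred k). unfold skip1. destruct (Nat.ltb_spec (pred k) e); lia. Qed.



Lemma pe_cmp a b : pe a b -> a = b \/ sprefix a b \/ sprefix b a.
Proof. intros H. apply pe_sp in H. tauto. Qed.

Lemma pe_cmp2 a b : pe a b \/ pe b a -> a = b \/ sprefix a b \/ sprefix b a.
Proof. intros [H|H]; apply pe_sp in H; destruct H as [->|H]; auto. Qed.

Lemma branch_seq (B : list nat -> Prop) : branch sprefix B ->
  exists g : nat -> list nat, g 0 = [] /\ (forall k, g (S k) = g k ++ [pick (fun n => B (g k ++ [n])) 0]) /\
    forall z, B z <-> exists k, z = g k.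
Proof.
  intros [Hpc Hmax].
  assert (Hpre : forall z w, B z -> pe w z -> B w).
  { intros z w Bz Pw. apply (Hmax (fun x => B x \/ x = w)); auto.
    intros a b Ha Hb. destruct Ha as [Ha| ->], Hb as [Hb| ->].
    - now apply Hpc. 
    - destruct (Hpc a z Ha Bz) as [->|[H|H]].
      + apply pe_cmp2. now right.
      + apply pe_cmp2. apply (pe_comparable a w z (sp_pe _ _ H) Pw).
      + right; right. destruct (pe_sp _ _ Pw) as [->|P]; auto. eapply sp_trans; eauto.
    - destruct (Hpc b z Hb Bz) as [->|[H|H]].
      + apply pe_cmp2. now left.
      + apply pe_cmp2. apply (pe_comparable w b z Pw (sp_pe _ _ H)).
      + right; left. destruct (pe_sp _ _ Pw) as [->|P]; auto. eapply sp_trans; eauto.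
    - auto. }
  assert (Hext : forall z, B z -> exists n, B (z ++ [n])).
  { intros z Bz. destruct (classic (exists z', B z' /\ sprefix z z')) as [[z' [B' [t [Ht Et]]]]|Hno].
    - destruct t as [|n t]; [congruence|]. exists n. apply (Hpre z'); auto. exists t. rewrite <- Et, <- app_assoc. reflexivity.
    - exists 0. apply (Hmax (fun x => B x \/ x = z ++ [0])); auto.
      intros a b Ha Hb.
      assert (Hy : forall y, B y -> sprefix y (z ++ [0])).
      { intros y By. destruct (Hpc y z By Bz) as [->|[H|H]].
        + apply sp_app.
        + eapply sp_trans; [exact H|]. apply sp_app.
        + exfalso; apply Hno; eauto. }
      destruct Ha as [Ha| ->], Hb as [Hb| ->]; auto. }
  assert (Hlen : forall a b, B a -> B b -> length a = length b -> a = b).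
  { intros a b Ha Hb E. destruct (Hpc a b Ha Hb) as [H|[H|H]]; auto; apply sprefix_len in H; lia. }
  set (g := fix g (k : nat) : list nat := match k with 0 => [] | S k' => g k' ++ [pick (fun n => B (g k' ++ [n])) 0] end).
  assert (Bg : forall k, B (g k)).
  { induction k.
    - simpl. apply (Hmax (fun x => B x \/ x = [])); [auto| |right; reflexivity].
      intros a b Ha Hb. destruct Ha as [Ha| ->], Hb as [Hb| ->].
      + auto.
      + destruct a as [|n a]; [left; reflexivity|]. right; right. exists (n :: a). split; [congruence|reflexivity].
      + destruct b as [|n b]; [left; reflexivity|]. right; left. exists (n :: b). split; [congruence|reflexivity].
      + left; reflexivity.
    - simpl. apply (pick_spec (fun n => B (g k ++ [n]))). now apply Hext. }
  assert (Lg : forall k, length (g k) = k).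
  { induction k. auto. simpl. rewrite length_app. simpl. lia. }
  exists g. split; auto. split; auto. intros z. split.
  - intros Bz. exists (length z). apply Hlen; auto.
  - intros [k ->]. auto.
Qed.

Section New.
Variables (X : Type) (opn : (X -> Prop) -> Prop) (C : X -> Prop) (f : X -> nat)
  (L : list nat -> X -> Prop) (x0 : X).
Hypothesis Htop : is_topology opn.
Hypothesis Hf : forall x y, C x -> C y -> f x = f y -> x = y.
Hypothesis L0 : forall p, L [] p.
Hypothesis Lo : forall u, opn (L u).
Hypothesis Lp : forall u p, L u p <-> exists n, L (u ++ [n]) p.
Hypothesis Ld : forall u n n' p, n <> n' -> L (u ++ [n]) p -> L (u ++ [n']) p -> False.
Hypothesis Lb : forall s : nat -> list nat, (forall m, exists n, s (S m) = s m ++ [n]) ->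
  exists pt, forall q, (forall m, L (s m) q) <-> q = pt.
Hypothesis Lg : forall p W, opn W -> W p ->
  exists u, L u p /\ exists N0, forall n, N0 <= n -> forall q, L (u ++ [n]) q -> W q.

Lemma Lmono a t p : L (a ++ t) p -> L a p.
Proof.
  revert p. induction t using rev_ind; intros p H.
  - now rewrite app_nil_r in H.
  - apply IHt. apply Lp. exists x. now rewrite <- app_assoc.
Qed.

Lemma Lmono' a b p : pe a b -> L b p -> L a p.
Proof. intros [t <-]. apply Lmono. Qed.

Lemma L_uniq k : forall a b p, length a = k -> length b = k -> L a p -> L b p -> a = b.
Proof.
  induction k; intros a b p Ha Hb H1 H2.
  - destruct a, b; simpl in *; try lia; auto.
  - destruct (exists_last (l:=a)) as [a' [n Ea]]. { intros ->; simpl in Ha; lia. }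
    destruct (exists_last (l:=b)) as [b' [n' Eb]]. { intros ->; simpl in Hb; lia. }
    subst a b. rewrite length_app in Ha, Hb. simpl in Ha, Hb.
    assert (a' = b'). { apply (IHk a' b' p); try lia; eapply Lmono; eauto. }
    subst b'. destruct (Nat.eq_dec n n'). now subst.
    exfalso. eapply Ld; eauto.
Qed.

Lemma L_comp a b p : L a p -> L b p -> pe a b \/ pe b a.
Proof.
  intros Ha Hb. destruct (Nat.le_ge_cases (length a) (length b)).
  - left. assert (E : a = firstn (length a) b).
    { apply (L_uniq (length a) _ _ p); auto. rewrite length_firstn; lia.
      apply (Lmono _ (skipn (length a) b)). now rewrite firstn_skipn. }
    rewrite E. exists (skipn (length a) b). apply firstn_skipn.
  - right. assert (E : b = firstn (length b) a).
    { apply (L_uniq (length b) _ _ p); auto. rewrite length_firstn; lia.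
      apply (Lmono _ (skipn (length b) a)). now rewrite firstn_skipn. }
    rewrite E. exists (skipn (length b) a). apply firstn_skipn.
Qed.

Lemma good_exists u : exists x, L u x /\ ~ C x.
Proof.
  set (step := fun (w : list nat) (m : nat) =>
    if excluded_middle_informative (exists c, C c /\ f c = m /\ L (w ++ [0]) c) then 1 else 0).
  set (sq := fix sq (m : nat) : list nat := match m with 0 => u | S k => sq k ++ [step (sq k) k] end).
  destruct (Lb sq) as [pt Hpt]. { intros m. exists (step (sq m) m). reflexivity. }
  exists pt. assert (Hall : forall m, L (sq m) pt) by (apply Hpt; reflexivity).
  split. apply (Hall 0).
  intros Cpt. specialize (Hall (S (f pt))). simpl in Hall. unfold step in Hall.
  destruct excluded_middle_informative as [[c [Cc [Fc Lc]]]|Hn].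
  - assert (c = pt) by (apply Hf; auto). subst c.
    eapply (Ld _ 0 1); eauto.
  - apply Hn. exists pt. auto.
Qed.

Definition dir x u := pick (fun n => L (u ++ [n]) x) 0.
Definition hasC u := exists c, C c /\ L u c.
Definition pC u := pick (fun p => C p /\ L u p /\ forall c, C c -> L u c -> f p <= f c) x0.
Definition good u := pick (fun q => L u q /\ ~ C q) x0.

Lemma dir_spec x u : L u x -> L (u ++ [dir x u]) x.
Proof. intros H. apply (pick_spec (fun n => L (u ++ [n]) x)). now apply Lp. Qed.

Lemma good_spec u : L u (good u) /\ ~ C (good u).
Proof. apply (pick_spec (fun q => L u q /\ ~ C q)). apply good_exists. Qed.

Lemma pC_spec u : hasC u -> C (pC u) /\ L u (pC u) /\ forall c, C c -> L u c -> f (pC u) <= f c.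
Proof.
  intros [c [Cc Lc]]. apply (pick_spec (fun p => C p /\ L u p /\ forall c, C c -> L u c -> f p <= f c)).
  remember (f c) as n. revert c Cc Lc Heqn.
  induction n as [n IH] using (well_founded_induction lt_wf). intros c Cc Lc En.
  destruct (classic (exists c', C c' /\ L u c' /\ f c' < f c)) as [[c' [H1 [H2 H3]]]|Hno].
  - eapply (IH (f c')); eauto. lia.
  - exists c. split; auto. split; auto. intros c' H1 H2. destruct (Nat.le_gt_cases (f c) (f c')); auto.
    exfalso; apply Hno; eauto.
Qed.

Inductive St : Type := Cyl (u : list nat) | Imp (x : X) (u : list nat) (w : X) (v : list nat).

Definition child (s : St) (m : nat) : St :=
  match s with
  | Cyl u => if excluded_middle_informative (hasC u) then
      match m with
      | 0 => Imp (pC u) (u ++ [dir (pC u) u]) (good (u ++ [S (dir (pC u) u)])) (u ++ [S (dir (pC u) u)])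
      | S n => Cyl (u ++ [skip2 (dir (pC u) u) n]) end
    else Cyl (u ++ [m])
  | Imp x u w v => match m with
      | 0 => Imp w v x (u ++ [dir x u])
      | S n => Cyl (u ++ [skip1 (dir x u) n]) end
  end.

Definition O (s : St) : X -> Prop :=
  match s with Cyl u => L u | Imp _ u _ v => fun p => L u p \/ L v p end.

Definition Inv (s : St) : Prop :=
  match s with
  | Cyl _ => True
  | Imp x u w v => L u x /\ L v w /\ (forall p, L u p -> L v p -> False) /\
      ((C x /\ ~ C w) \/ (~ C x /\ C w))
  end.

Lemma Inv_child s m : Inv s -> Inv (child s m).
Proof.
  destruct s as [u|x u w v]; simpl; intros H.
  - destruct excluded_middle_informative as [h|h]; [|exact I].
    destruct m; [|exact I]. simpl.
    destruct (pC_spec u h) as [C1 [C2 _]]. destruct (good_spec (u ++ [S (dir (pC u) u)])) as [G1 G2].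
    split. now apply dir_spec. split; auto. split; auto.
    intros p H1 H2. eapply (Ld u (dir (pC u) u) (S (dir (pC u) u))); eauto.
  - destruct m; [|exact I]. simpl. destruct H as [H1 [H2 [H3 H4]]].
    split; auto. split. now apply dir_spec. split. 2: tauto.
    intros p P1 P2. apply (H3 p); auto. eapply Lmono; eauto.
Qed.

Lemma child_sub s m p : Inv s -> O (child s m) p -> O s p.
Proof.
  destruct s as [u|x u w v]; simpl; intros H.
  - destruct excluded_middle_informative as [h|h]; [destruct m|]; simpl.
    + intros [P|P]; eapply Lmono; eauto.
    + apply Lmono.
    + apply Lmono.
  - destruct m; simpl.
    + intros [P|P]; auto. left; eapply Lmono; eauto.
    + intros P. left; eapply Lmono; eauto.
Qed.

Lemma child_cover s p : Inv s -> O s p -> exists m, O (child s m) p.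
Proof.
  destruct s as [u|x u w v]; simpl; intros H.
  - intros P. apply Lp in P. destruct P as [k Pk].
    destruct excluded_middle_informative as [h|h].
    + set (b := dir (pC u) u) in *.
      destruct (Nat.eq_dec k b) as [->|Hb]. { exists 0. simpl. auto. }
      destruct (Nat.eq_dec k (S b)) as [->|Hb']. { exists 0. simpl. auto. }
      destruct (skip2_surj b k Hb Hb') as [n Hn]. exists (S n). simpl. now rewrite Hn.
    + exists k. exact Pk.
  - intros [P|P].
    + apply Lp in P. destruct P as [k Pk].
      destruct (Nat.eq_dec k (dir x u)) as [->|He]. { exists 0. simpl. auto. }
      destruct (skip1_surj' _ k He) as [n Hn]. exists (S n). simpl. now rewrite Hn.
    + exists 0. simpl. auto.
Qed.

Lemma child_disj s m m' p : Inv s -> m <> m' -> O (child s m) p -> O (child s m') p -> False.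
Proof.
  destruct s as [u|x u w v]; simpl; intros H Hm.
  - destruct excluded_middle_informative as [h|h].
    + set (b := dir (pC u) u) in *.
      destruct m as [|n], m' as [|n']; simpl; try lia.
      * intros [P|P] P'.
        -- eapply (Ld u b (skip2 b n')); eauto. intro E; symmetry in E; now apply skip2_ne1 in E.
        -- eapply (Ld u (S b) (skip2 b n')); eauto. intro E; symmetry in E; now apply skip2_ne2 in E.
      * intros P' [P|P].
        -- eapply (Ld u b (skip2 b n)); eauto. intro E; symmetry in E; now apply skip2_ne1 in E.
        -- eapply (Ld u (S b) (skip2 b n)); eauto. intro E; symmetry in E; now apply skip2_ne2 in E.
      * intros P P'. eapply (Ld u (skip2 b n) (skip2 b n')); eauto.
        intro E. apply skip2_inj in E. lia.
    + intros P P'. eapply Ld; eauto.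
  - destruct H as [H1 [H2 [H3 H4]]]. set (e := dir x u) in *.
    destruct m as [|n], m' as [|n']; simpl; try lia.
    + intros [P|P] P'.
      * apply (H3 p); auto. eapply Lmono; eauto.
      * eapply (Ld u e (skip1 e n')); eauto. intro E; symmetry in E; now apply skip1_ne in E.
    + intros P' [P|P].
      * apply (H3 p); auto. eapply Lmono; eauto.
      * eapply (Ld u e (skip1 e n)); eauto. intro E; symmetry in E; now apply skip1_ne in E.
    + intros P P'. eapply (Ld u (skip1 e n) (skip1 e n')); eauto.
      intro E. apply skip1_inj in E. lia.
Qed.

Lemma O_good s : exists p, O s p /\ ~ C p.
Proof.
  destruct s as [u|x u w v]; simpl.
  - exists (good u). apply good_spec.
  - exists (good u). destruct (good_spec u). auto.
Qed.

Definition st (z : list nat) : St := fold_left child z (Cyl []).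

Lemma st_app z m : st (z ++ [m]) = child (st z) m.
Proof. unfold st. now rewrite fold_left_app. Qed.

Lemma Inv_st z : Inv (st z).
Proof. induction z using rev_ind. exact I. rewrite st_app. now apply Inv_child. Qed.

Definition Center (s : St) (u : list nat) : Prop := s = Cyl u \/ exists x w v, s = Imp x u w v.

Lemma center_exists u y : L u y -> exists z, O (st z) y /\ Center (st z) u.
Proof.
  revert y. induction u as [|n u IH] using rev_ind; intros y Hy.
  - exists []. split. apply L0. left; reflexivity.
  - destruct (IH y) as [z [Hz Hc]]. { eapply Lmono; eauto. }
    destruct Hc as [Hc|[x [w [v Hc]]]].
    + destruct (excluded_middle_informative (hasC u)) as [h|h].
      * set (b := dir (pC u) u).
        destruct (Nat.eq_dec n b) as [->|Hb].
        { exists (z ++ [0]). rewrite st_app, Hc. simpl. destruct excluded_middle_informative; [|contradiction].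
          split. left; auto. right. eauto. }
        destruct (Nat.eq_dec n (S b)) as [->|Hb'].
        { exists (z ++ [0] ++ [0]). rewrite app_assoc, !st_app, Hc. simpl.
          destruct excluded_middle_informative; [|contradiction]. simpl.
          split. left; auto. right. eauto. }
        destruct (skip2_surj b n Hb Hb') as [n' Hn'].
        exists (z ++ [S n']). rewrite st_app, Hc. simpl. destruct excluded_middle_informative; [|contradiction].
        fold b. rewrite Hn'. split; auto. left; auto.
      * exists (z ++ [n]). rewrite st_app, Hc. simpl. destruct excluded_middle_informative; [contradiction|].
        split; auto. left; auto.
    + set (e := dir x u).
      destruct (Nat.eq_dec n e) as [->|He].
      * exists (z ++ [0] ++ [0]). rewrite app_assoc, !st_app, Hc. simpl.
        split. left; auto. right. eauto.
      * destruct (skip1_surj' e n He) as [n' Hn'].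
        exists (z ++ [S n']). rewrite st_app, Hc. simpl. fold e. rewrite Hn'. split; auto. left; auto.
Qed.

Lemma center_child s u n : Center s u -> exists d, n <= d /\ forall p, O (child s (S n)) p -> L (u ++ [d]) p.
Proof.
  intros [->|[x [w [v ->]]]]; simpl.
  - destruct excluded_middle_informative; simpl.
    + exists (skip2 (dir (pC u) u) n); split; [apply skip2_ge|]. auto.
    + exists (S n). split; auto.
  - exists (skip1 (dir x u) n); split; [apply skip1_ge|]. auto.
Qed.

Lemma chain_pe (s : nat -> list nat) : (forall j, exists n, s (S j) = s j ++ [n]) ->
  forall j j', j <= j' -> pe (s j) (s j').
Proof.
  intros Hs j j' H. induction H. apply pe_refl. eapply pe_trans; eauto.
  destruct (Hs m) as [n ->]. apply pe_app.
Qed.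

Lemma firstn_pe a b j : pe a b -> j <= length a -> firstn j a = firstn j b.
Proof. intros [t <-] H. rewrite firstn_app. replace (j - length a) with 0 by lia. simpl. now rewrite app_nil_r. Qed.

Lemma firstn_S_nth (a : list nat) j : j < length a -> firstn (S j) a = firstn j a ++ [nth j a 0].
Proof.
  revert j. induction a; intros j H; simpl in *. lia.
  destruct j; simpl. reflexivity. rewrite IHa by lia. reflexivity.
Qed.

Section Seq.
Variables (sq : nat -> St) (m : nat -> nat).
Hypothesis Hs0 : Inv (sq 0).
Hypothesis Hs : forall k, sq (S k) = child (sq k) (m k).

Lemma Inv_all k : Inv (sq k).
Proof. induction k. auto. rewrite Hs. now apply Inv_child. Qed.

Lemma O_mono k k' p : k <= k' -> O (sq k') p -> O (sq k) p.
Proof. intros H. induction H; auto. intros P. apply IHle. rewrite Hs in P. eapply child_sub; eauto. apply Inv_all. Qed.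

Lemma caseB : (exists K, forall k, K <= k -> (exists x u w v, sq k = Imp x u w v) /\ m k = 0) ->
  exists y, ~ C y /\ (forall k, O (sq k) y) /\ forall y', ~ C y' -> (forall k, O (sq k) y') -> y' = y.
Proof.
  intros [K HK].
  destruct (HK K (le_n _)) as [[x [u [w [v EK]]]] _].
  assert (IK := Inv_all K). rewrite EK in IK. destruct IK as [I1 [I2 [I3 I4]]].
  set (sx := fix sx (j : nat) : list nat := match j with 0 => u | S j' => sx j' ++ [dir x (sx j')] end).
  set (sy := fix sy (j : nat) : list nat := match j with 0 => v | S j' => sy j' ++ [dir w (sy j')] end).
  assert (Hj : forall j, sq (K + 2 * j) = Imp x (sx j) w (sy j)).
  { induction j. rewrite Nat.add_0_r. exact EK.
    replace (K + 2 * S j) with (S (S (K + 2 * j))) by lia.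
    rewrite (Hs (S (K + 2 * j))), (proj2 (HK (S (K + 2 * j)) ltac:(lia))).
    rewrite (Hs (K + 2 * j)), (proj2 (HK (K + 2 * j) ltac:(lia))), IHj. reflexivity. }
  assert (Sx : forall j, exists n, sx (S j) = sx j ++ [n]) by (intros j; eexists; reflexivity).
  assert (Sy : forall j, exists n, sy (S j) = sy j ++ [n]) by (intros j; eexists; reflexivity).
  assert (Xin : forall j, L (sx j) x). { induction j. exact I1. simpl. now apply dir_spec. }
  assert (Win : forall j, L (sy j) w). { induction j. exact I2. simpl. now apply dir_spec. }
  destruct (Lb sx Sx) as [px Hpx]. destruct (Lb sy Sy) as [py Hpy].
  assert (Ex : x = px) by (apply Hpx; auto). assert (Ew : w = py) by (apply Hpy; auto).
  assert (Both : forall y', (forall k, O (sq k) y') -> y' = x \/ y' = w).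
  { intros y' H.
    assert (H' : forall j, L (sx j) y' \/ L (sy j) y'). { intros j. specialize (H (K + 2 * j)). rewrite Hj in H. exact H. }
    destruct (classic (forall j, L (sx j) y')) as [A|A].
    - left. rewrite Ex. now apply Hpx.
    - right. rewrite Ew. apply Hpy. apply not_all_ex_not in A. destruct A as [j0 A].
      intros j. destruct (Nat.le_ge_cases j j0).
      + apply (Lmono' _ (sy j0)). apply chain_pe; auto. destruct (H' j0); tauto.
      + destruct (H' j) as [B|B]; auto. exfalso. apply A. eapply Lmono'; eauto. apply chain_pe; auto. }
  assert (Allin : forall z, z = x \/ z = w -> forall k, O (sq k) z).
  { intros z Hz k. apply (O_mono k (K + 2 * k)). lia. rewrite Hj. simpl.
    destruct Hz as [->| ->]; auto. }
  destruct I4 as [[Cx Cw]|[Cx Cw]].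
  - exists w. split; auto. split. apply Allin; auto. intros y' Hy' H.
    destruct (Both y' H) as [->| ->]; tauto.
  - exists x. split; auto. split. apply Allin; auto. intros y' Hy' H.
    destruct (Both y' H) as [->| ->]; tauto.
Qed.

Lemma cyl_grow k k' u u' : k < k' -> sq k = Cyl u -> sq k' = Cyl u' -> pe u u' /\ length u < length u'.
Proof.
  intros Hk E E'.
  assert (Sub : forall p, O (sq k') p -> O (child (Cyl u) (m k)) p).
  { intros p P. rewrite <- E, <- Hs. apply (O_mono (S k) k'); auto. }
  destruct (good_spec u') as [G1 _].
  assert (Hq : L u (good u')).
  { apply (child_sub (Cyl u) (m k)); [exact I|]. apply Sub. rewrite E'. exact G1. }
  assert (Hlen : length u < length u').
  { destruct (Nat.lt_ge_cases (length u) (length u')) as [H|H]; auto. exfalso.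
    assert (Pe : pe u' u).
    { destruct (L_comp u u' _ Hq G1) as [P|P]; auto.
      replace u' with u. apply pe_refl. apply pe_eq_len; auto. apply pe_len in P; lia. }
    destruct (O_good (child (Cyl u) (S (m k)))) as [p [Pp _]].
    apply (child_disj (Cyl u) (S (m k)) (m k) p); [exact I|lia|exact Pp|].
    apply Sub. rewrite E'. simpl. eapply Lmono'; eauto.
    apply (child_sub (Cyl u) (S (m k))); [exact I|exact Pp]. }
  split; auto. destruct (L_comp u u' _ Hq G1) as [P|P]; auto. apply pe_len in P; lia.
Qed.

Lemma cyl_comp k k' u u' : sq k = Cyl u -> sq k' = Cyl u' -> pe u u' \/ pe u' u.
Proof.
  intros E E'. destruct (Nat.lt_trichotomy k k') as [H|[H|H]].
  - left. eapply cyl_grow; eauto.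
  - subst. rewrite E in E'. inversion E'. left; apply pe_refl.
  - right. eapply cyl_grow; eauto.
Qed.

Lemma caseA : (forall K, exists k, K <= k /\ exists u, sq k = Cyl u) ->
  exists y, ~ C y /\ (forall k, O (sq k) y) /\ forall y', ~ C y' -> (forall k, O (sq k) y') -> y' = y.
Proof.
  intros HA.
  assert (Deep : forall j, exists u, (exists k, sq k = Cyl u) /\ j <= length u).
  { induction j.
    - destruct (HA 0) as [k [_ [u E]]]. exists u. split; eauto. lia.
    - destruct IHj as [u [[k E] Hl]]. destruct (HA (S k)) as [k' [Hk' [u' E']]].
      exists u'. split; eauto. destruct (cyl_grow k k' u u') as [_ H]; auto. lia. }
  set (cu := fun j => pick (fun u => (exists k, sq k = Cyl u) /\ j <= length u) []).
  assert (Hcu : forall j, (exists k, sq k = Cyl (cu j)) /\ j <= length (cu j)).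
  { intros j. apply (pick_spec (fun u => (exists k, sq k = Cyl u) /\ j <= length u)). apply Deep. }
  assert (Cmp : forall j j', pe (cu j) (cu j') \/ pe (cu j') (cu j)).
  { intros j j'. destruct (Hcu j) as [[k E] _]. destruct (Hcu j') as [[k' E'] _]. eapply cyl_comp; eauto. }
  assert (Fj : forall j j' u, j <= length u -> (exists k, sq k = Cyl u) -> j <= length (cu j') ->
             firstn j u = firstn j (cu j')).
  { intros j j' u H1 [k E] H2. destruct (Hcu j') as [[k' E'] _].
    destruct (cyl_comp k k' u (cu j') E E') as [P|P].
    - now apply firstn_pe. - symmetry. now apply firstn_pe. }
  set (s := fun j => firstn j (cu j)).
  assert (Hsucc : forall j, exists n, s (S j) = s j ++ [n]).
  { intros j. exists (nth j (cu (S j)) 0). unfold s.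
    destruct (Hcu (S j)) as [HH Hl]. rewrite firstn_S_nth by lia. f_equal.
    symmetry. apply Fj; [apply Hcu | apply Hcu | lia]. }
  destruct (Lb s Hsucc) as [r Hr].
  assert (Char : forall y, (forall k, O (sq k) y) <-> y = r).
  { intros y. rewrite <- Hr. split.
    - intros H j. destruct (Hcu j) as [[k E] _]. specialize (H k). rewrite E in H. simpl in H.
      eapply Lmono'; [|exact H]. unfold s. exists (skipn j (cu j)). apply firstn_skipn.
    - intros H k. destruct (HA k) as [k' [Hk [u' E']]]. apply (O_mono k k'); auto.
      rewrite E'. simpl. specialize (H (length u')). unfold s in H.
      rewrite <- (Fj (length u') (length u') u') in H; auto. rewrite firstn_all in H. exact H.
      eauto. apply Hcu. }
  assert (Rin : forall k u, sq k = Cyl u -> L u r).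
  { intros k u E. assert (H := proj2 (Char r) eq_refl k). rewrite E in H. exact H. }
  exists r. split.
  - intros Cr.
    assert (Avoid : forall k u, sq k = Cyl u -> hasC u -> forall d,
       ~ O (sq (S k + d)) (pC u) \/
       exists x u1 w v, sq (S k + d) = Imp x u1 w v /\ (x = pC u \/ w = pC u)).
    { intros k u E h. destruct (pC_spec u h) as [P1 [P2 _]].
      assert (Pb := dir_spec _ _ P2).
      induction d.
      - rewrite Nat.add_0_r, Hs, E. simpl. destruct excluded_middle_informative; [|contradiction].
        destruct (m k) as [|n]; simpl.
        + right. do 4 eexists. split. reflexivity. left; reflexivity.
        + left. intros P. eapply (Ld u (dir (pC u) u) (skip2 (dir (pC u) u) n)); eauto.
          intro Q'; symmetry in Q'; now apply skip2_ne1 in Q'.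
      - rewrite Nat.add_succ_r, Hs. destruct IHd as [Nin|[x [u1 [w [v [E1 Ht]]]]]].
        + left. intros P. apply Nin. eapply child_sub; eauto. apply Inv_all.
        + assert (II := Inv_all (S k + d)). rewrite E1 in II. destruct II as [J1 [J2 [J3 J4]]].
          rewrite E1. destruct (m (S k + d)) as [|n]; simpl.
          * right. do 4 eexists. split. reflexivity. tauto.
          * left. intros P. destruct Ht as [Eq|Eq]; rewrite <- Eq in P.
            -- apply (Ld u1 (dir x u1) (skip1 (dir x u1) n) x);
                 [intro Q'; symmetry in Q'; now apply skip1_ne in Q' | now apply dir_spec | exact P].
            -- apply (J3 w); auto. eapply Lmono; eauto. }
    assert (Grow : forall N, exists k u, sq k = Cyl u /\ N <= f (pC u)).
    { induction N.
      - destruct (HA 0) as [k [_ [u E]]]. exists k, u. split; auto. lia.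
      - destruct IHN as [k [u [E Hn]]]. destruct (HA (S k)) as [k' [Hk' [u' E']]].
        assert (h : hasC u) by (red; exists r; split; [exact Cr | eapply Rin; eauto]).
        assert (h' : hasC u') by (red; exists r; split; [exact Cr | eapply Rin; eauto]).
        destruct (pC_spec u h) as [P1 [P2 P3]]. destruct (pC_spec u' h') as [Q1 [Q2 Q3]].
        destruct (cyl_grow k k' u u' ltac:(lia) E E') as [Pe _].
        assert (Hle : f (pC u) <= f (pC u')) by (apply P3; auto; eapply Lmono'; eauto).
        assert (Hne : pC u <> pC u').
        { intros Eq. destruct (Avoid k u E h (k' - S k)) as [Nin|[x [u1 [w [v [E1 _]]]]]];
          replace (S k + (k' - S k)) with k' in * by lia.
          - apply Nin. rewrite E'. simpl. now rewrite Eq.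
          - rewrite E' in E1. discriminate. }
        exists k', u'. split; auto.
        assert (f (pC u) <> f (pC u')) by (intro; apply Hne; apply Hf; auto). lia. }
    destruct (Grow (S (f r))) as [k [u [E Hn]]].
    assert (h : hasC u) by (red; exists r; split; [exact Cr | eapply Rin; eauto]).
    destruct (pC_spec u h) as [_ [_ P3]]. specialize (P3 r Cr (Rin k u E)). lia.
  - split. intros k. now apply Char. intros y' _ H. now apply Char.
Qed.

Lemma fruit_seq : exists y, ~ C y /\ (forall k, O (sq k) y) /\ forall y', ~ C y' -> (forall k, O (sq k) y') -> y' = y.
Proof.
  destruct (classic (exists K, forall k, K <= k -> (exists x u w v, sq k = Imp x u w v) /\ m k = 0)) as [H|H].
  - now apply caseB.
  - apply caseA. intros K. apply not_ex_all_not with (n := K) in H.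
    apply not_all_ex_not in H. destruct H as [k H]. apply imply_to_and in H. destruct H as [Hk H].
    destruct (sq k) as [u|x u w v] eqn:E.
    + exists k. split; eauto.
    + exists (S k). split. lia. rewrite Hs, E. destruct (m k) as [|n] eqn:Em.
      * exfalso. apply H. split; auto. eauto.
      * simpl. eauto.
Qed.

End Seq.
Lemma union_open (A B : X -> Prop) : opn A -> opn B -> opn (fun p => A p \/ B p).
Proof.
  intros HA HB. destruct Htop as [_ [_ HU]].
  assert (E := HU (fun U => U = A \/ U = B) ltac:(intros U [-> | ->]; auto)).
  assert (Eq : (fun p => exists U, (U = A \/ U = B) /\ U p) = (fun p => A p \/ B p)).
  { apply functional_extensionality. intros p. apply propositional_extensionality. split.
    - intros [U [[-> | ->] H]]; auto.
    - intros [H|H]; eauto. }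
  now rewrite <- Eq.
Qed.

Lemma new_pi : pi_tree (@subspace_open X opn C) sprefix (fun z (y : compl_sub C) => O (st z) (proj1_sig y)).
Proof.
  split; [split; [|split; [|split; [|split; [|split]]]]|].
  - apply is_tree_sp.
  - exists (fun x => x). split; auto. split; eauto. intros; tauto.
  - intros z. exists (O (st z)). split; [|intros; tauto].
    destruct (st z); simpl. apply Lo. apply union_open; apply Lo.
  - intros z _. split.
    + intros y. split.
      * intros H. destruct (child_cover (st z) (proj1_sig y) (Inv_st z) H) as [m Hm].
        exists (z ++ [m]). split. apply sons_sp; eauto. now rewrite st_app.
      * intros [s [Hs H]]. apply sons_sp in Hs. destruct Hs as [m ->]. rewrite st_app in H.
        eapply child_sub; eauto. apply Inv_st.
    + intros s s' Hs Hs' Hne y [H1 H2].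
      apply sons_sp in Hs. destruct Hs as [m ->]. apply sons_sp in Hs'. destruct Hs' as [m' ->].
      rewrite st_app in H1, H2. apply (child_disj (st z) m m' (proj1_sig y)); auto. apply Inv_st.
      intros ->; auto.
  - intros B HB. destruct (branch_seq B HB) as [g [G0 [GS GB]]].
    set (mm := fun k => pick (fun n => B (g k ++ [n])) 0).
    destruct (fruit_seq (fun k => st (g k)) mm) as [y0 [Cy0 [Iny0 Uy0]]].
    + apply Inv_st.
    + intros k. rewrite GS. apply st_app.
    + exists (exist _ y0 Cy0). intros q. unfold fruit. split.
      * intros H. assert (E : proj1_sig q = y0).
        { apply Uy0. apply (proj2_sig q). intros k. apply (H (g k)). apply GB. eauto. }
        destruct q as [q Hq]. simpl in E. subst q. f_equal. apply proof_irrelevance.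
      * intros -> x Bx. apply GB in Bx. destruct Bx as [k ->]. apply Iny0.
  - intros r Hr p. destruct (Hr []) as [E|E].
    + subst r. apply L0.
    + apply sprefix_len in E. simpl in E. lia.
  - intros p N [U [[W [HW HUW]] [Up HUN]]].
    destruct (Lg (proj1_sig p) W HW) as [u [Hu [N0 HN0]]]. { now apply HUW. }
    destruct (center_exists u (proj1_sig p) Hu) as [z [Hz Hc]].
    exists z. split. exact Hz.
    intros D HD [d Dd].
    set (C' := fun s => exists n, N0 <= n /\ s = z ++ [S n]).
    exists (fun y => exists s, C' s /\ O (st s) (proj1_sig y)). split; [|split].
    + exists C'. split; [|intros; tauto]. split.
      * intros s [n [_ ->]]. apply sons_sp; eauto.
      * exists (map (fun k => z ++ [k]) (seq 0 (S N0))). intros s Hs HnC.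
        apply sons_sp in Hs. destruct Hs as [k ->]. apply in_map_iff. exists k. split; auto.
        apply in_seq. destruct k as [|n]. lia.
        destruct (Nat.le_gt_cases N0 n). exfalso; apply HnC; exists n; auto. lia.
    + destruct (O_good (child (st z) (S N0))) as [q [Hq Cq]].
      exists (exist _ q Cq). exists (z ++ [S N0]). split. exists N0; auto. simpl. now rewrite st_app.
    + intros y [s [[n [Hn ->]] H]]. apply HD. apply HUN. apply HUW.
      rewrite st_app in H. destruct (center_child (st z) u n Hc) as [dd [Hdd Hd]].
      apply (HN0 dd). lia. apply Hd. exact H.
Qed.

End New.

Theorem mainTheorem2 (X : Type) (opn : (X -> Prop) -> Prop) (C : X -> Prop) :
  is_topology opn -> at_most_countable C -> has_pi_tree opn ->
  @has_pi_tree (compl_sub C) (@subspace_open X opn C).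
Proof.
  intros Htop [f Hf] [Q [lt [l [[Htree [[phi [Hinj [Hsurj Hlt]]] [Hopen [Hls [Hsb Hroot]]]]] Hgr]]]].
  set (psi := fun u => proj1_sig (constructive_indefinite_description _ (Hsurj u))).
  assert (Hpsi : forall u, phi (psi u) = u) by (intros u; apply (proj2_sig (constructive_indefinite_description _ (Hsurj u)))).
  set (LL := OldT.L X Q l psi).
  destruct (OldT.Lb X Q lt l phi psi Hinj Hpsi Hlt Hls Hsb (fun m => repeat 0 m)) as [x0 _].
  { intros m. exists 0. simpl. rewrite repeat_cons. reflexivity. }
  exists (list nat), sprefix.
  eexists.
  apply (new_pi X opn C f LL x0 Htop Hf).
  - apply (OldT.L0 X Q lt l phi psi Hinj Hpsi Hlt Hroot).
  - apply (OldT.Lo X opn Q l psi Hopen).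
  - apply (OldT.Lp X Q lt l phi psi Hinj Hpsi Hlt Hls).
  - apply (OldT.Ld X Q lt l phi psi Hinj Hpsi Hlt Hls).
  - apply (OldT.Lb X Q lt l phi psi Hinj Hpsi Hlt Hls Hsb).
  - apply (OldT.Lg X opn Q lt l phi psi Hinj Hpsi Hlt Hgr).
Qed.
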